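(* Fix $N\in\mathbb{N}$, a constant $0<\alpha\le 1$, and for each $k\in\{0,\dots,N-1\}$ matrices $A_k\in\mathbb{R}^{n_x\times n_x}$, $B_k\in\mathbb{R}^{n_x\times n_u}$, $F_k\in\mathbb{R}^{n_x\times n_w}$, $E_k\in\mathbb{R}^{n_x\times n_p}$, $C_k\in\mathbb{R}^{n_q\times n_x}$, $D_k\in\mathbb{R}^{n_q\times n_u}$, $G_k\in\mathbb{R}^{n_q\times n_w}$ and a constant $\gamma_k>0$. Suppose there exist $Q_k\in\mathbb{S}^{n_x}_{++}$ for $k\in\{0,\dots,N\}$, and, for $k\in\{0,\dots,N-1\}$, matrices $Y_k\in\mathbb{R}^{n_u\times n_x}$ and scalars $\nu^p_k>0$, $\lambda^w_k>0$ such that for all $k\in\{0,\dots,N-1\}$ $$\begin{bmatrix} \alpha Q_k-\lambda^w_k Q_k & * & * & * & *\\ 0 & \nu^p_k I_{n_p} & * & * & *\\ 0 & 0 & \lambda^w_k I_{n_w} & * & *\\ A_kQ_k+B_kY_k & \nu^p_k E_k & F_k & Q_{k+1} & *\\ C_kQ_k+D_kY_k & 0 & G_k & 0 & \frac{\nu^p_k}{\gamma_k^2} I_{n_q} \end{bmatrix}\succeq 0 .$$ Let $K_k=Y_kQ_k^{-1}$, $A^{cl}_k=A_k+B_kK_k$, $C^{cl}_k=C_k+D_kK_k$. Then for every $k\in\{0,\dots,N-1\}$ and every $\eta\in\mathbb{R}^{n_x}$, $\delta p\in\mathbb{R}^{n_p}$, $w\in\mathbb{R}^{n_w}$ satisfying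 $$\|\delta p\|_2\le\gamma_k\|C^{cl}_k\eta+G_kw\|_2\quad\text{and}\quad \eta^\top Q_k^{-1}\eta\ \ge\ \|w\|_2^2,$$ the vector $\eta^+=A^{cl}_k\eta+F_kw+E_k\delta p$ satisfies $$(\eta^+)^\top Q_{k+1}^{-1}\eta^+\ \le\ \alpha\,\eta^\top Q_k^{-1}\eta .$$
   Context: Here $\mathbb{S}^n_{++}$ denotes the set of symmetric positive definite $n\times n$ matrices, and in a symmetric block matrix the symbol $*$ denotes the block determined by symmetry (i.e. the transpose of the corresponding lower-triangular block). $I_m$ is the $m\times m$ identity. The conclusion is the ''Lyapunov condition'' for the quadratic function $V(k,\eta)=\eta^\top Q_k^{-1}\eta$ along the discrete-time difference closed-loop system $\eta_{k+1}=A^{cl}_k\eta_k+F_kw_k+E_k\delta p_k$, $\delta q_k=C^{cl}_k\eta_k+G_kw_k$, in which the nonlinearity satisfies the Lipschitz-type bound $\|\delta p_k\|_2\le\gamma_k\|\delta q_k\|_2$. *)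

(* Defs.v *)
From HB Require Import structures.
From mathcomp Require Import all_boot all_order all_algebra.
Set Implicit Arguments. Unset Strict Implicit. Unset Printing Implicit Defensive.
Import Order.TTheory GRing.Theory Num.Theory.
Local Open Scope ring_scope.

Definition psd (R : realFieldType) (n : nat) (M : 'M[R]_n) : Prop :=
  M^T = M /\ forall x : 'cV[R]_n, 0 <= (x^T *m M *m x) 0 0.

Definition posdef (R : realFieldType) (n : nat) (M : 'M[R]_n) : Prop :=
  M^T = M /\ forall x : 'cV[R]_n, x != 0 -> 0 < (x^T *m M *m x) 0 0.

Definition norm2 (R : rcfType) (n : nat) (v : 'cV[R]_n) : R :=
  Num.sqrt (\sum_(i < n) v i 0 ^+ 2).

Definition qform (R : ringType) (n : nat) (P : 'M[R]_n) (x : 'cV[R]_n) : R :=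
  (x^T *m P *m x) 0 0.

Definition lmi_mx (R : fieldType) (nx nu nw np nq : nat) (alpha lam nup gam : R)
  (A : 'M[R]_nx) (B : 'M[R]_(nx, nu)) (F : 'M[R]_(nx, nw)) (E : 'M[R]_(nx, np))
  (C : 'M[R]_(nq, nx)) (D : 'M[R]_(nq, nu)) (G : 'M[R]_(nq, nw))
  (Qk Qk1 : 'M[R]_nx) (Y : 'M[R]_(nu, nx))
  : 'M[R]_(nx + (np + (nw + (nx + nq)))) :=
  let AQ := A *m Qk + B *m Y in
  let CQ := C *m Qk + D *m Y in
  col_mx
    (row_mx ((alpha - lam) *: Qk) (row_mx 0 (row_mx 0 (row_mx AQ^T CQ^T))))
  (col_mx
    (row_mx 0 (row_mx (nup%:M : 'M[R]_np) (row_mx 0 (row_mx (nup *: E)^T 0))))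
  (col_mx
    (row_mx 0 (row_mx 0 (row_mx (lam%:M : 'M[R]_nw) (row_mx F^T G^T))))
  (col_mx
    (row_mx AQ (row_mx (nup *: E) (row_mx F (row_mx Qk1 0))))
    (row_mx CQ (row_mx 0 (row_mx G (row_mx 0 ((nup / gam ^+ 2)%:M : 'M[R]_nq)))))))).

(* Main.v *)
Require Import Defs.
From HB Require Import structures.
From mathcomp Require Import all_boot all_order all_algebra.
From mathcomp Require Import ring lra.
Import Order.TTheory GRing.Theory Num.Theory.
Local Open Scope ring_scope.

Lemma posdef_unit (R : rcfType) n (M : 'M[R]_n) : posdef M -> M \in unitmx.
Proof.
move=> [Ms Mp]; rewrite unitmxE unitfE; apply/negP => /det0P [v v0 vM].
have := Mp v^T; rewrite trmx_eq0 v0 trmxK vM mul0mx mxE ltxx; by move/(_ isT).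
Qed.

Lemma tr11 (R : pzRingType) (M : 'M[R]_1) : M^T = M.
Proof. by apply/matrixP => i j; rewrite !ord1 mxE. Qed.

Lemma norm2E (R : rcfType) n (v : 'cV[R]_n) : norm2 v ^+ 2 = (v^T *m v) 0 0.
Proof.
rewrite /norm2 sqr_sqrtr; last by apply: sumr_ge0 => i _; apply: sqr_ge0.
rewrite mxE; apply: eq_bigr => i _; by rewrite mxE expr2.
Qed.

Lemma e00D (R : pzRingType) (M1 M2 : 'M[R]_1) : (M1 + M2) 0 0 = M1 0 0 + M2 0 0.
Proof. by rewrite mxE. Qed.
Lemma e00N (R : pzRingType) (M1 : 'M[R]_1) : (- M1) 0 0 = - M1 0 0.
Proof. by rewrite mxE. Qed.
Lemma e00Z (R : pzRingType) a (M1 : 'M[R]_1) : (a *: M1) 0 0 = a * M1 0 0.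
Proof. by rewrite mxE. Qed.

Theorem theorem1 (R : rcfType) (N nx nu nw np nq : nat) (alpha : R)
  (A : nat -> 'M[R]_nx) (B : nat -> 'M[R]_(nx, nu))
  (F : nat -> 'M[R]_(nx, nw)) (E : nat -> 'M[R]_(nx, np))
  (C : nat -> 'M[R]_(nq, nx)) (D : nat -> 'M[R]_(nq, nu))
  (G : nat -> 'M[R]_(nq, nw)) (gam : nat -> R)
  (Q : nat -> 'M[R]_nx) (Y : nat -> 'M[R]_(nu, nx)) (nup lam : nat -> R) :
  0 < alpha -> alpha <= 1 ->
  (forall k, (k < N)%N -> 0 < gam k) ->
  (forall k, (k <= N)%N -> posdef (Q k)) ->
  (forall k, (k < N)%N -> 0 < nup k) ->
  (forall k, (k < N)%N -> 0 < lam k) ->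
  (forall k, (k < N)%N ->
     psd (lmi_mx alpha (lam k) (nup k) (gam k) (A k) (B k) (F k) (E k)
                 (C k) (D k) (G k) (Q k) (Q k.+1) (Y k))) ->
  forall k, (k < N)%N ->
  let K := Y k *m invmx (Q k) in
  let Acl := A k + B k *m K in
  let Ccl := C k + D k *m K in
  forall (eta : 'cV[R]_nx) (dp : 'cV[R]_np) (w : 'cV[R]_nw),
    norm2 dp <= gam k * norm2 (Ccl *m eta + G k *m w) ->
    norm2 w ^+ 2 <= qform (invmx (Q k)) eta ->
    let etap := Acl *m eta + F k *m w + E k *m dp in
    qform (invmx (Q k.+1)) etap <= alpha * qform (invmx (Q k)) eta.
Proof.
move=> a0 a1 hg hQ hnu hlam hL k kN K Acl Ccl eta dp w hdp hw.
cbv zeta; set etap := Acl *m eta + F k *m w + E k *m dp.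
have uQ : Q k \in unitmx by apply: posdef_unit; apply: hQ; apply: ltnW.
have uQ1 : Q k.+1 \in unitmx by apply: posdef_unit; apply: hQ.
have QsT : (Q k)^T = Q k by case: (hQ k (ltnW kN)).
have Q1sT : (Q k.+1)^T = Q k.+1 by case: (hQ k.+1 kN).
set P := invmx (Q k). set P1 := invmx (Q k.+1).
have PsT : P^T = P by rewrite /P trmx_inv QsT.
have P1sT : P1^T = P1 by rewrite /P1 trmx_inv Q1sT.
set u := Ccl *m eta + G k *m w.
rewrite -/u in hdp.
set s := gam k ^+ 2 / nup k.
have := (hL k kN).2 (col_mx (P *m eta) (col_mx ((nup k)^-1 *: dp) (col_mx w (col_mx (- (P1 *m etap)) (- (s *: u)))))).
rewrite /lmi_mx -mulmxA !mul_col_mx !mul_row_col !mul0mx !addr0 !add0r.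
rewrite !tr_col_mx !mul_row_col.
have nu0 : nup k != 0 by rewrite gt_eqF // hnu.
have g0 : gam k != 0 by rewrite gt_eqF // hg.
have PQ : P *m Q k = 1%:M by rewrite /P mulVmx.
have QP : Q k *m P = 1%:M by rewrite /P mulmxV.
have QP1 : Q k.+1 *m P1 = 1%:M by rewrite /P1 mulmxV.
have hAQ : (A k *m Q k + B k *m Y k) *m (P *m eta) = Acl *m eta.
  by rewrite /Acl /K -/P mulmxDl !mulmxDl -!mulmxA (mulmxA (Q k)) QP mul1mx.
have hCQ : (C k *m Q k + D k *m Y k) *m (P *m eta) = Ccl *m eta.
  by rewrite /Ccl /K -/P mulmxDl !mulmxDl -!mulmxA (mulmxA (Q k)) QP mul1mx.
have hE : nup k *: E k *m ((nup k)^-1 *: dp) = E k *m dp.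
  by rewrite -scalemxAl -scalemxAr scalerA mulfV // scale1r.
have hQ1 : Q k.+1 *m - (P1 *m etap) = - etap by rewrite mulmxN mulmxA QP1 mul1mx.
have hG : (nup k / gam k ^+ 2)%:M *m - (s *: u) = - u.
  rewrite mul_scalar_mx scalerN scalerA.
  have -> : nup k / gam k ^+ 2 * s = 1 by rewrite /s mulrA divfK ?mulfV // expf_neq0.
  by rewrite scale1r.
move=> H0.
have H : 0 <=
  ((P *m eta)^T *m ((alpha - lam k) *: Q k *m (P *m eta) +
                    ((A k *m Q k + B k *m Y k)^T *m
                     - (P1 *m etap) +
                     (C k *m Q k + D k *m Y k)^T *m
                     - (s *: u))) +
   (((nup k)^-1 *: dp)^T *m ((nup k)%:M *m ((nup k)^-1 *: dp) +
                             (nup k *: E k)^T *m - (P1 *m etap)) +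
    (w^T *m ((lam k)%:M *m w +
             ((F k)^T *m - (P1 *m etap) + (G k)^T *m - (s *: u))) +
     ((- (P1 *m etap))^T *m ((A k *m Q k + B k *m Y k) *m
                             (P *m eta) +
                             (nup k *: E k *m ((nup k)^-1 *: dp) +
                              (F k *m w + Q k.+1 *m - (P1 *m etap)))) +
      (- (s *: u))^T *m ((C k *m Q k + D k *m Y k) *m
                         (P *m eta) +
                         (G k *m w + (nup k / gam k ^+ 2)%:M *m - (s *: u)))))))
   0 0 := H0.
clear H0.
rewrite hAQ hCQ hE hQ1 hG in H.
have e4 : Acl *m eta + (E k *m dp + (F k *m w + - etap)) = 0.
  by rewrite /etap; apply/matrixP => i j; rewrite !mxE; ring.
have e5 : Ccl *m eta + (G k *m w + - u) = 0 by rewrite addrA subrr.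
rewrite e4 e5 !mulmx0 !addr0 in H.
have etapE : etap = Acl *m eta + F k *m w + E k *m dp by [].
have uE : u = Ccl *m eta + G k *m w by [].
set z := P1 *m etap in H.
have zE : z = P1 *m etap by [].
clearbody z u etap.
rewrite !mulmxDr !mulmxN !mulmxA -!trmx_mul hAQ hCQ hE in H.
rewrite !mul_mx_scalar -!scalemxAr -!scalemxAl !linearZ /= -!scalemxAl in H.
rewrite !e00D !e00N !e00Z !e00N in H.
have hq0 : (P *m eta)^T *m Q k *m P *m eta = eta^T *m P *m eta.
  by rewrite trmx_mul PsT -!mulmxA (mulmxA (Q k)) QP mul1mx mulmxA.
rewrite hq0 in H.
have hq1 : qform P1 etap = ((Acl *m eta)^T *m z) 0 0 + ((F k *m w)^T *m z) 0 0
   + ((E k *m dp)^T *m z) 0 0.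
  by rewrite /qform -mulmxA -zE {1}etapE !linearD !mulmxDl !e00D.
have huu : norm2 u ^+ 2 = ((Ccl *m eta)^T *m u) 0 0 + ((G k *m w)^T *m u) 0 0.
  by rewrite norm2E {1}uE linearD mulmxDl e00D.
have hdd := norm2E _ _ dp.
have hww := norm2E _ _ w.
have nd0 : 0 <= norm2 dp by rewrite /norm2 sqrtr_ge0.
have nu0' : 0 <= norm2 u by rewrite /norm2 sqrtr_ge0.
have hsq : norm2 dp ^+ 2 <= gam k ^+ 2 * norm2 u ^+ 2.
  rewrite -exprMn !expr2; apply: ler_pM; [exact: nd0 | exact: nd0 | exact: hdp | exact: hdp].
have hn : 0 < nup k by apply: hnu.
have hl : 0 < lam k by apply: hlam.
have h2 : (nup k)^-1 * norm2 dp ^+ 2 <= s * norm2 u ^+ 2.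
  have -> : s * norm2 u ^+ 2 = (nup k)^-1 * (gam k ^+ 2 * norm2 u ^+ 2).
    by rewrite /s mulrAC mulrC.
  have hi : 0 <= (nup k)^-1 by rewrite invr_ge0 ltW.
  exact (ler_wpM2l hi hsq).
have h3 : nup k * ((nup k)^-1 * ((nup k)^-1 * (dp^T *m dp) 0 0)) = (nup k)^-1 * norm2 dp ^+ 2.
  by rewrite hdd (mulrA (nup k)) mulfV // mul1r.
rewrite h3 in H.
have h1 : lam k * norm2 w ^+ 2 <= lam k * (eta^T *m P *m eta) 0 0.
  by apply: ler_wpM2l => //; apply: ltW.
rewrite -hww in H.
have {}H : 0 <=
    (alpha - lam k) * (eta^T *m P *m eta) 0 0 +
    (- ((Acl *m eta)^T *m z) 0 0 + s * - ((Ccl *m eta)^T *m u) 0 0) +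
    ((nup k)^-1 * norm2 dp ^+ 2 - ((E k *m dp)^T *m z) 0 0 +
     (lam k * norm2 w ^+ 2 +
      (- ((F k *m w)^T *m z) 0 0 + s * - ((G k *m w)^T *m u) 0 0))) := H.
rewrite hq1.
have -> : qform P eta = (eta^T *m P *m eta) 0 0 by [].
move: H h1 h2 huu.
generalize (((Acl *m eta)^T *m z) 0 0) (((F k *m w)^T *m z) 0 0) (((E k *m dp)^T *m z) 0 0)
  (((Ccl *m eta)^T *m u) 0 0) (((G k *m w)^T *m u) 0 0) ((eta^T *m P *m eta) 0 0)
  (norm2 u ^+ 2) (norm2 dp ^+ 2) (norm2 w ^+ 2) => xa xf xe ca ga q0 uu dd ww.
move=> H h1 h2 huu.

nra.
Qed.
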